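(* Let $(V,\omega)$ be a symplectic space over $\mathbb F_q$ and $\overline V=(V,-\omega)$. Let $r:H(V)\to H(\overline V)$, $r(v,z)=(v,-z)$ (a group isomorphism), and for $L^\circ\in OLag(V)=OLag(\overline V)$ let $r^*_{L^\circ}:\mathcal H_{L^\circ}(\overline V,\psi)\to\mathcal H_{L^\circ}(V,\psi^{-1})$, $f\mapsto f\circ r$. Let $\overline T$ be the canonical trivialization for $(\overline V,\psi)$ and $T$ the canonical trivialization for $(V,\psi^{-1})$. Then for all $(M^\circ,L^\circ)\in OLag(V)^2$, $$r^*_{M^\circ}\circ\overline T_{M^\circ,L^\circ}=T_{M^\circ,L^\circ}\circ r^*_{L^\circ}.$$
   Context: $q$ is a power of an odd prime. For a symplectic space $(V,\omega)$ of dimension $2n$ over $\mathbb F_q$ and a non-trivial character $\psi$ of $\mathbb F_q$: $H(V)$ is $V\times\mathbb F_q$ with $(v,z)(v',z')=(v+v',z+z'+\tfrac12\omega(v,v'))$; an oriented Lagrangian is $L^\circ=(L,o_L)$ with $L$ Lagrangian and $o_L\in\bigwedge^nL$ nonzero, $OLag(V)$ their set; $\mathcal H_{L^\circ}(V,\psi)$ is the space of $f:H(V)\to\mathbb C$ with $f((0,z)(l,0)h)=\psi(z)f(h)$ ($z\in\mathbb F_q,l\in L,h\in H(V)$), with $H(V)$ acting by right translation. $\omega_\wedge(a_1\wedge\dots\wedge a_n,b_1\wedge\dots\wedge b_n)=(-1)^{n(n-1)/2}\det(\omega(a_i,b_j))$ (computed with the form of the space in question); $\sigma$ the Legendre character;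 $G_1(\psi)=\sum_z\psi(\tfrac12z^2)$. For $M+L=V$ set $T^0_{M^\circ,L^\circ}f(h)=(G_1(\psi)/q)^n\sigma((-1)^{n(n-1)/2}\omega_\wedge(o_L,o_M))\sum_{m\in M}f((m,0)h)$. The canonical trivialization for $(V,\psi)$ is the unique family of $H(V)$-intertwining isomorphisms $T_{M^\circ,L^\circ}:\mathcal H_{L^\circ}(V,\psi)\to\mathcal H_{M^\circ}(V,\psi)$, $(M^\circ,L^\circ)\in OLag(V)^2$, with $T_{N^\circ,M^\circ}T_{M^\circ,L^\circ}=T_{N^\circ,L^\circ}$ for all triples and $T=T^0$ on pairs in general position. *)

(* Defs.v *)
From HB Require Import structures.
From mathcomp Require Import all_boot all_order all_algebra all_field.
Set Implicit Arguments. Unset Strict Implicit. Unset Printing Implicit Defensive.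
Import GRing.Theory Num.Theory.
Local Open Scope ring_scope.

Section Heisenberg.
Variables (F : finFieldType) (n : nat).

(* The symplectic space V = F^(2n) (row vectors); the form is given by a matrix W:
   omega(u,v) = u W v^T. *)
Definition sform (W : 'M[F]_(n.*2)) (u v : 'rV[F]_(n.*2)) : F := (u *m W *m v^T) 0 0.

(* W defines a symplectic form: skew (= alternating in odd char) and nondegenerate. *)
Definition symplectic (W : 'M[F]_(n.*2)) : bool := (W^T == - W) && (W \in unitmx).

Definition heis : finType := ('rV[F]_(n.*2) * F)%type.

Definition hmul (W : 'M[F]_(n.*2)) (h h' : heis) : heis :=
  (h.1 + h'.1, h.2 + h'.2 + 2%:R^-1 * sform W h.1 h'.1).

(* An oriented Lagrangian L° = (L, o_L) is represented by a basis matrix B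
   (rows b_1..b_n, L = row space of B, o_L = b_1 /\ ... /\ b_n). *)
Definition is_olag (W : 'M[F]_(n.*2)) (B : 'M[F]_(n, n.*2)) : bool :=
  row_free B && (B *m W *m B^T == 0).

Definition same_olag (B B' : 'M[F]_(n, n.*2)) : Prop :=
  exists P : 'M[F]_n, \det P = 1 /\ B' = P *m B.

Definition additive_char (psi : F -> algC) : Prop :=
  forall a b, psi (a + b) = psi a * psi b.

Definition nontrivial_char (psi : F -> algC) : Prop := exists z, psi z != 1.

Definition in_schr (W : 'M[F]_(n.*2)) (psi : F -> algC) (B : 'M[F]_(n, n.*2))
  (f : {ffun heis -> algC}) : Prop :=
  forall (z : F) (l : 'rV[F]_(n.*2)) (h : heis), (l <= B)%MS ->
    f (hmul W (0, z) (hmul W (l, 0) h)) = psi z * f h.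

Definition rtrans (W : 'M[F]_(n.*2)) (g : heis) (f : {ffun heis -> algC})
  : {ffun heis -> algC} := [ffun h => f (hmul W h g)].

Definition owedge (W : 'M[F]_(n.*2)) (A B : 'M[F]_(n, n.*2)) : F :=
  (-1) ^+ ((n * (n - 1)) %/ 2)%N * \det (A *m W *m B^T).

Definition legendre (x : F) : algC :=
  if x == 0 then 0 else if [exists y : F, y ^+ 2 == x] then 1 else -1.

Definition G1 (psi : F -> algC) : algC := \sum_(z : F) psi (2%:R^-1 * z ^+ 2).

Definition transversal (M L : 'M[F]_(n, n.*2)) : bool := row_full (col_mx M L).

Definition T0 (W : 'M[F]_(n.*2)) (psi : F -> algC) (M L : 'M[F]_(n, n.*2))
  (f : {ffun heis -> algC}) : {ffun heis -> algC} :=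
  [ffun h => (G1 psi / #|F|%:R) ^+ n
     * legendre ((-1) ^+ ((n * (n - 1)) %/ 2)%N * owedge W L M)
     * \sum_(m : 'rV[F]_(n.*2) | (m <= M)%MS) f (hmul W (m, 0) h)].

(* T is (the) canonical trivialization for (V = (F^(2n), W), psi):
   a family of H(V)-intertwining isomorphisms H_{L°} -> H_{M°}, indexed by
   pairs of oriented Lagrangians (so invariant under change of basis with the
   same orientation), transitive, and equal to T0 on pairs in general position. *)
Definition canon_triv (W : 'M[F]_(n.*2)) (psi : F -> algC)
  (T : 'M[F]_(n, n.*2) -> 'M[F]_(n, n.*2) -> {ffun heis -> algC} -> {ffun heis -> algC})
  : Prop :=
      (forall M M' L L', is_olag W M -> is_olag W L -> same_olag M M' -> same_olag L L' ->
         forall f, in_schr W psi L f -> T M' L' f = T M L f) /\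
      (forall M L, is_olag W M -> is_olag W L ->
         forall f, in_schr W psi L f -> in_schr W psi M (T M L f)) /\
      (forall M L, is_olag W M -> is_olag W L ->
         forall (a : algC) f g, in_schr W psi L f -> in_schr W psi L g ->
           T M L [ffun h => a * f h + g h] = [ffun h => a * T M L f h + T M L g h]) /\
      (forall M L, is_olag W M -> is_olag W L ->
         (forall f g, in_schr W psi L f -> in_schr W psi L g ->
            T M L f = T M L g -> f = g) /\
         (forall g, in_schr W psi M g -> exists2 f, in_schr W psi L f & T M L f = g)) /\
      (forall M L, is_olag W M -> is_olag W L ->
         forall f g, in_schr W psi L f -> T M L (rtrans W g f) = rtrans W g (T M L f)) /\
      (forall N M L, is_olag W N -> is_olag W M -> is_olag W L ->
         forall f, in_schr W psi L f -> T N M (T M L f) = T N L f) /\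
      (forall M L, is_olag W M -> is_olag W L -> transversal M L ->
         forall f, in_schr W psi L f -> T M L f = T0 W psi M L f).

Definition rstar (f : {ffun heis -> algC}) : {ffun heis -> algC} :=
  [ffun h : heis => f (h.1, - h.2)].

End Heisenberg.

(* Main.v *)
Require Import Defs.
From HB Require Import structures.
From mathcomp Require Import all_boot all_order all_algebra all_field.
From mathcomp Require Import all_fingroup all_solvable.
From Stdlib Require Import Lia.
Import GRing.Theory Num.Theory.
Local Open Scope ring_scope.
Set Implicit Arguments. Unset Strict Implicit. Unset Printing Implicit Defensive.

Ltac nlia := unfold addn, subn, muln, addn_rec, subn_rec, muln_rec in *; lia.

Section Lag.
Variables (F : finFieldType) (n : nat) (W : 'M[F]_(n.*2)).
Hypothesis hskew : W^T = - W.
Hypothesis hunit : W \in unitmx.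
Hypothesis h2 : (2%:R : F) != 0.

Definition perp k (A : 'M[F]_(k, n.*2)) : 'M[F]_(n.*2) := kermx (W *m A^T).

Lemma sub_perp k j (B : 'M[F]_(j, n.*2)) (A : 'M[F]_(k, n.*2)) :
  (B <= perp A)%MS = (B *m W *m A^T == 0).
Proof. by rewrite sub_kermx mulmxA. Qed.

Lemma perp_sym1 k j (B : 'M[F]_(j, n.*2)) (A : 'M[F]_(k, n.*2)) :
  B *m W *m A^T = 0 -> A *m W *m B^T = 0.
Proof.
move=> H; have := congr1 trmx H.
rewrite !trmx_mul trmxK hskew mulNmx mulmxN mulmxA trmx0 => /eqP.
by rewrite oppr_eq0 => /eqP.
Qed.

Lemma perp_symE k j (B : 'M[F]_(j, n.*2)) (A : 'M[F]_(k, n.*2)) :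
  (B <= perp A)%MS = (A <= perp B)%MS.
Proof.
by rewrite !sub_perp; apply/eqP/eqP => /perp_sym1.
Qed.

Lemma rank_perp k (A : 'M[F]_(k, n.*2)) : \rank (perp A) = (n.*2 - \rank A)%N.
Proof.
rewrite /perp mxrank_ker.
have Hf : row_full W by rewrite row_full_unit.
by rewrite (eqmxMfull _ Hf) mxrank_tr.
Qed.

Lemma perp_adds k j p (A : 'M[F]_(k, n.*2)) (B : 'M[F]_(j, n.*2)) (X : 'M[F]_(p, n.*2)) :
  (X <= perp A)%MS -> (X <= perp B)%MS -> (X <= perp (A + B)%MS)%MS.
Proof.
by rewrite !(perp_symE X) addsmx_sub => -> ->.
Qed.

Lemma alt_form (v : 'rV[F]_(n.*2)) : v *m W *m v^T = 0.
Proof.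
set x := v *m W *m v^T.
have Ht : x^T = - x by rewrite /x !trmx_mul trmxK hskew mulNmx mulmxN mulmxA.
apply/matrixP => i j; rewrite !ord1 mxE.
have := congr1 (fun A : 'M[F]_1 => A 0 0) Ht; rewrite !mxE => /eqP.
rewrite -subr_eq0 opprK -mulr2n -mulr_natr mulf_eq0 (negbTE h2) orbF.
by move/eqP.
Qed.

Lemma rank_addv k (A : 'M[F]_(k, n.*2)) (v : 'rV[F]_(n.*2)) :
  ~~ (v <= A)%MS -> \rank (A + v)%MS = (\rank A).+1.
Proof.
move=> Hv.
have v0 : v != 0 by apply: contraNneq Hv => ->; apply: sub0mx.
have Hc : \rank (A :&: v)%MS = 0%N.
  have Hs := capmxSr A v.
  have Hle := mxrankS Hs; rewrite rank_rV v0 /= in Hle.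
  case: (posnP (\rank (A :&: v)%MS)) => // Hpos; exfalso.
  move/negP: Hv; apply.
  have Hg := geq_leqif (mxrank_leqif_sup Hs).
  have : (v <= A :&: v)%MS by rewrite -Hg rank_rV v0.
  by move/submx_trans; apply; apply: capmxSl.
have := mxrank_sum_cap A v.
by rewrite Hc rank_rV v0 addn0 addn1.
Qed.

Lemma exists_out k j (P : 'M[F]_(k, n.*2)) (X : 'M[F]_(j, n.*2)) :
  (\rank X < \rank P)%N -> exists2 a : 'rV[F]_(n.*2), (a <= P)%MS & ~~ (a <= X)%MS.
Proof.
move=> H.
have : ~~ (P <= X)%MS.
  by apply/negP => /mxrankS; rewrite leqNgt H.
case/row_subPn => i Hi; exists (row i P) => //; exact: row_sub.
Qed.

Lemma two_out k j p (P : 'M[F]_(k, n.*2)) (X : 'M[F]_(j, n.*2)) (Y : 'M[F]_(p, n.*2))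
  (a b : 'rV[F]_(n.*2)) :
  (a <= P)%MS -> ~~ (a <= X)%MS -> (b <= P)%MS -> ~~ (b <= Y)%MS ->
  exists v : 'rV[F]_(n.*2), [/\ (v <= P)%MS, ~~ (v <= X)%MS & ~~ (v <= Y)%MS].
Proof.
move=> aP aX bP bY.
case: (boolP (a <= Y)%MS) => aY; last by exists a.
case: (boolP (b <= X)%MS) => bX; last by exists b.
exists (a + b); split.
- exact: addmx_sub.
- apply/negP => H; move/negP: aX; apply.
  have : (a + b - b <= X)%MS by apply: addmx_sub => //; rewrite eqmx_opp.
  by rewrite addrK.
- apply/negP => H; move/negP: bY; apply.
  have : (a + b - a <= Y)%MS by apply: addmx_sub => //; rewrite eqmx_opp.
  by rewrite addrC addKr.
Qed.

Variables (L M : 'M[F]_(n, n.*2)).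
Hypotheses (rL : \rank L = n) (rM : \rank M = n).
Hypotheses (iL : (L <= perp L)%MS) (iM : (M <= perp M)%MS).

Lemma bound_cap k (Nk : 'M[F]_(n.*2)) (Q : 'M[F]_(n, n.*2)) :
  (k < n)%N -> \rank Nk = k -> \rank Q = n -> (Q <= perp Q)%MS ->
  \rank (Nk + Q)%MS = (k + n)%N ->
  (\rank (perp Nk :&: (Nk + Q))%MS < \rank (perp Nk))%N.
Proof.
move=> Hk rN rQ iQ rNQ.
set P := perp Nk.
have rP : \rank P = (n.*2 - k)%N by rewrite rank_perp rN.
have HZ : (P :&: Q <= perp (Nk + Q)%MS)%MS.
  apply: perp_adds; first exact: capmxSl.
  exact: submx_trans (capmxSr _ _) iQ.
have rZ := mxrankS HZ; rewrite rank_perp rNQ in rZ.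
have e1 := mxrank_sum_cap P Q.
have e2 := mxrank_sum_cap P (Nk + Q)%MS.
have s1 : (\rank (P + Q)%MS <= \rank (P + (Nk + Q))%MS)%N.
  by apply: mxrankS; apply: addsmxS => //; apply: addsmxSr.
have r2 : (\rank (P + (Nk + Q))%MS <= n.*2)%N by apply: rank_leq_col.
move: e1 e2 rZ s1 r2 Hk; rewrite rP rQ rNQ.
move: (\rank (P + Q)%MS) (\rank (P :&: Q)%MS) (\rank (P + (Nk + Q))%MS) (\rank (P :&: (Nk + Q))%MS).
move=> x1 x2 x3 x4; rewrite -addnn.
move=> e1 e2 /leP rZ /leP s1 /leP r2 /ltP Hk'; apply/ltP; nlia.
Qed.

Lemma ext k : (k <= n)%N -> exists Nk : 'M[F]_(n.*2),
  [/\ \rank Nk = k, (Nk <= perp Nk)%MS, \rank (Nk + L)%MS = (k + n)%N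
    & \rank (Nk + M)%MS = (k + n)%N].
Proof.
elim: k => [_ | k IH Hk].
  exists 0; split; first exact: mxrank0.
  - exact: sub0mx.
  - by rewrite adds0mx rL.
  - by rewrite adds0mx rM.
have [Nk [rN iN rNL rNM]] := IH (ltnW Hk).
set P := perp Nk.
have [a aP aX] := exists_out (bound_cap Hk rN rL iL rNL).
have [b bP bY] := exists_out (bound_cap Hk rN rM iM rNM).
have [v [vP vX vY]] := two_out aP aX bP bY.
have vL : ~~ (v <= Nk + L)%MS by rewrite sub_capmx vP in vX.
have vM : ~~ (v <= Nk + M)%MS by rewrite sub_capmx vP in vY.
have vN : ~~ (v <= Nk)%MS.
  by apply: contra vL => H; apply: submx_trans H (addsmxSl _ _).
exists (Nk + v)%MS; split.
- by rewrite rank_addv // rN.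
- apply: perp_adds; rewrite addsmx_sub; apply/andP; split => //.
  + by rewrite perp_symE.
  + by rewrite sub_perp alt_form.
- by rewrite -addsmxA (addsmxC v) addsmxA rank_addv // rNL.
- by rewrite -addsmxA (addsmxC v) addsmxA rank_addv // rNM.
Qed.

Lemma common_transversal : exists B : 'M[F]_(n, n.*2),
  [/\ is_olag W B, Defs.transversal M B & Defs.transversal B L].
Proof.
have [N [rN iN rNL rNM]] := ext (leqnn n).
set B := castmx (rN, erefl (n.*2)) (row_base N).
have eB : (B :=: N)%MS := eqmx_trans (eqmx_cast _ _) (eq_row_base N).
exists B; split.
- apply/andP; split; first by rewrite /row_free eB rN.
  by rewrite -sub_perp eB perp_symE eB.
- rewrite /Defs.transversal /row_full -addsmxE addsmxC (adds_eqmx eB (eqmx_refl M)).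
  by rewrite rNM addnn.
- rewrite /Defs.transversal /row_full -addsmxE (adds_eqmx eB (eqmx_refl L)).
  by rewrite rNL addnn.
Qed.

End Lag.
Section Gauss.
Variable (F : finFieldType).
Hypothesis h2 : (2%:R : F) != 0.

Local Notation issq x := [exists y : F, y ^+ 2 == x].

Lemma legendreE (x : F) : legendre x = if x == 0 then 0 else if issq x then 1 else -1.
Proof. by []. Qed.

Lemma unit_pow : exists g : F, forall x : F, x != 0 -> exists i, x = g ^+ i.
Proof.
have /cyclicP [g Hg] := field_unit_group_cyclic [set: {unit F}]%G.
exists (FinRing.uval g) => x x0.
have Ux : x \is a GRing.unit by rewrite unitfE.
have : FinRing.Unit Ux \in <[g]>%g by rewrite -Hg inE.
case/cycleP => i Hi; exists i.
by rewrite -FinRing.val_unitX -Hi.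
Qed.

Lemma even_sq (g : F) i : ~~ odd i -> issq (g ^+ i).
Proof.
move=> Hi; apply/existsP; exists (g ^+ i./2).
rewrite -exprM -{2}(odd_double_half i) (negbTE Hi) add0n.
by rewrite -muln2.
Qed.

Lemma nsq_mul (x y : F) : x != 0 -> y != 0 -> ~~ issq x -> ~~ issq y -> issq (x * y).
Proof.
move=> x0 y0 nx ny.
have [g Hg] := unit_pow.
move: nx ny; have [i ->] := Hg x x0; have [j ->] := Hg y y0.
case oi: (odd i); last by rewrite (@even_sq g i) ?oi.
case oj: (odd j); last by rewrite (@even_sq g j) ?oj.
by move=> _ _; rewrite -exprD even_sq // oddD oi oj.
Qed.

Lemma legendreM (x y : F) : legendre (x * y) = legendre x * legendre y.
Proof.
rewrite !legendreE mulf_eq0.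
case: (eqVneq x 0) => [_|x0]; first by rewrite mul0r.
case: (eqVneq y 0) => [_|y0]; first by rewrite mulr0.
rewrite /=.
case sx: (issq x); case sy: (issq y).
- suff -> : issq (x * y) by rewrite mulr1.
  case/existsP: sx => a /eqP <-; case/existsP: sy => b /eqP <-.
  by apply/existsP; exists (a * b); rewrite exprMn.
- suff -> : issq (x * y) = false by rewrite mul1r.
  apply/negbTE/negP => /existsP [c /eqP Hc]; suff : issq y by rewrite sy.
  case/existsP: sx => a /eqP Ha.
  have a0 : a != 0 by apply: contraNneq x0 => a0; rewrite -Ha a0 expr0n.
  apply/existsP; exists (c / a); rewrite expr_div_n Hc Ha.
  by rewrite mulrC mulKf.
- suff -> : issq (x * y) = false by rewrite mulr1.
  apply/negbTE/negP => /existsP [c /eqP Hc]; suff : issq x by rewrite sx.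
  case/existsP: sy => a /eqP Ha.
  have a0 : a != 0 by apply: contraNneq y0 => a0; rewrite -Ha a0 expr0n.
  apply/existsP; exists (c / a); rewrite expr_div_n Hc Ha.
  by rewrite mulfK.
- by rewrite nsq_mul ?sx ?sy // mulrNN mulr1.
Qed.

Lemma card_sqrt (x : F) : (#|[set z : F | z ^+ 2 == x]|)%:R = 1 + legendre x :> algC.
Proof.
rewrite legendreE; case: (eqVneq x 0) => [->|x0].
  have -> : [set z : F | z ^+ 2 == 0] = [set 0].
    by apply/setP => z; rewrite !inE expf_eq0.
  by rewrite cards1 addr0.
case sx: (issq x).
  case/existsP: sx => a /eqP Ha.
  have a0 : a != 0 by apply: contraNneq x0 => a0; rewrite -Ha a0 expr0n.
  have -> : [set z : F | z ^+ 2 == x] = [set a; - a].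
    by apply/setP => z; rewrite !inE -Ha eqf_sqr.
  rewrite cards2.
  have -> : a != - a.
    apply/negP => /eqP H; move/negP: a0; apply.
    have : a + a = 0 by rewrite {1}H addNr.
    by move/eqP; rewrite -mulr2n -mulr_natr mulf_eq0 (negbTE h2) orbF.
  by [].
have -> : [set z : F | z ^+ 2 == x] = set0.
  apply/setP => z; rewrite !inE; apply/negP => Hz; suff : issq x by rewrite sx.
  by apply/existsP; exists z.
by rewrite cards0 subrr.
Qed.

Lemma sum_sq (h : F -> algC) :
  \sum_(z : F) h (z ^+ 2) = \sum_(x : F) h x * (1 + legendre x).
Proof.
rewrite (partition_big (fun z : F => z ^+ 2) xpredT) //=.
apply: eq_bigr => x _.
rewrite -card_sqrt mulr_natr -sumr_const.
apply: eq_big => [z|z]; first by rewrite inE.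
by move=> /eqP ->.
Qed.

Variable psi : F -> algC.
Hypothesis hadd : additive_char psi.
Hypothesis hnt : nontrivial_char psi.

Hypothesis hp0 : psi 0 != 0.

Lemma psi0 : psi 0 = 1.
Proof.
have H := hadd 0 0; rewrite addr0 in H.
by apply: (mulfI hp0); rewrite mulr1 -H.
Qed.

Lemma psiN (a : F) : psi (- a) = (psi a)^-1.
Proof.
have H : psi a * psi (- a) = 1 by rewrite -hadd subrr psi0.
have a0 : psi a != 0 by apply: contra_eq_neq H => ->; rewrite mul0r eq_sym oner_eq0.
by rewrite -[RHS]mulr1 -H mulKf.
Qed.

Lemma sum_psi : \sum_(x : F) psi x = 0.
Proof.
case: hnt => z Hz.
have H : \sum_(x : F) psi x = psi z * \sum_(x : F) psi x.
  rewrite [LHS](reindex_inj (addrI z)) big_distrr /=.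
  by apply: eq_bigr => x _; rewrite hadd.
have : (1 - psi z) * \sum_(x : F) psi x = 0 by rewrite mulrBl mul1r -H subrr.
by move/eqP; rewrite mulf_eq0 subr_eq0 eq_sym (negbTE Hz) => /eqP.
Qed.

Lemma G1E (c : F) (phi : F -> algC) : (forall x, phi x = psi (c * x)) -> c != 0 ->
  \sum_(z : F) phi (z ^+ 2) = \sum_(x : F) psi (c * x) * legendre x.
Proof.
move=> Hphi c0; rewrite sum_sq.
under eq_bigr do rewrite Hphi mulrDr mulr1.
rewrite big_split /=.
have -> : \sum_(x : F) psi (c * x) = 0.
  by have := sum_psi; rewrite (reindex_inj (mulfI c0)).
by rewrite add0r.
Qed.

Lemma G1_inv : G1 (fun z => (psi z)^-1) = legendre (-1 : F) * G1 psi.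
Proof.
have i0 : (2%:R : F)^-1 != 0 by rewrite invr_eq0.
rewrite /G1 (G1E (c := (2%:R)^-1) (fun x => erefl)) //.
rewrite (G1E (c := - (2%:R)^-1) (phi := fun x => (psi (2%:R^-1 * x))^-1)) ?oppr_eq0 //; last by move=> x; rewrite -psiN mulNr.
rewrite (reindex_inj oppr_inj) big_distrr /=.
apply: eq_bigr => x _.
by rewrite mulrNN -[- x]mulN1r legendreM mulrCA.
Qed.

Lemma gauss_step (y : F) : G1 psi * legendre (- y) = G1 (fun z => (psi z)^-1) * legendre y.
Proof.
by rewrite G1_inv -[- y]mulN1r legendreM mulrCA mulrA.
Qed.

Lemma gauss_pow k (y : F) : G1 psi ^+ k * legendre ((-1) ^+ k * y) =
  G1 (fun z => (psi z)^-1) ^+ k * legendre y.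
Proof.
elim: k => [|k IH]; first by rewrite !expr0 !mul1r.
rewrite exprS [(-1) ^+ k.+1]exprS mulN1r mulNr -mulrA mulrCA gauss_step.
by rewrite mulrCA IH mulrA -exprS.
Qed.

End Gauss.

Section Main.
Variables (F : finFieldType) (n : nat).

Lemma sformN (W : 'M[F]_(n.*2)) u v : sform (- W) u v = - sform W u v.
Proof. by rewrite /sform mulmxN mulNmx mxE. Qed.

Lemma sform0 (W : 'M[F]_(n.*2)) v : sform W 0 v = 0.
Proof. by rewrite /sform !mul0mx mxE. Qed.

Definition rr (x : heis F n) : heis F n := (x.1, - x.2).

Lemma rr_hmul (W : 'M[F]_(n.*2)) a b : rr (hmul W a b) = hmul (- W) (rr a) (rr b).
Proof. by rewrite /rr /hmul /= sformN mulrN !opprD. Qed.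

Lemma rstarE (f : {ffun heis F n -> algC}) x : rstar f x = f (rr x).
Proof. by rewrite /rstar ffunE. Qed.

Lemma hmul00 (W : 'M[F]_(n.*2)) h : hmul W (0, 0) h = h.
Proof. by case: h => a b; rewrite /hmul /= sform0 mulr0 !add0r addr0. Qed.

Lemma olagN (W : 'M[F]_(n.*2)) B : is_olag (- W) B = is_olag W B.
Proof. by rewrite /is_olag mulmxN mulNmx oppr_eq0. Qed.

Lemma lin_zero (W : 'M[F]_(n.*2)) psi T M L :
  canon_triv W psi T -> is_olag W M -> is_olag W L -> T M L 0 = 0.
Proof.
case=> [_ [_ [Hlin _]]] oM oL.
have h0 : in_schr W psi L 0 by move=> z l h _; rewrite !ffunE mulr0.
have := Hlin M L oM oL (-1) 0 0 h0 h0.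
have -> : [ffun h => -1 * (0 : {ffun heis F n -> algC}) h + (0 : {ffun heis F n -> algC}) h] = 0.
  by apply/ffunP => h; rewrite !ffunE mulr0 addr0.
move=> ->; apply/ffunP => h; rewrite !ffunE.
by rewrite mulN1r addNr.
Qed.

Variables (psi : F -> algC).
Hypothesis h2 : (2%:R : F) != 0.
Hypothesis hadd : additive_char psi.
Hypothesis hnt : nontrivial_char psi.
Hypothesis hp0 : psi 0 != 0.

Lemma schr_rstar (W : 'M[F]_(n.*2)) L f :
  in_schr (- W) psi L f -> in_schr W (fun z => (psi z)^-1) L (rstar f).
Proof.
move=> hf z l h hl.
rewrite !rstarE !rr_hmul /rr /= oppr0.
by rewrite hf // psiN.
Qed.

Lemma rstar_T0 (W : 'M[F]_(n.*2)) X Y h :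
  rstar (T0 (- W) psi X Y h) = T0 W (fun z => (psi z)^-1) X Y (rstar h).
Proof.
apply/ffunP => x; rewrite rstarE !ffunE.
have -> : \sum_(m | (m <= X)%MS) h (hmul (- W) (m, 0) (rr x)) =
          \sum_(m | (m <= X)%MS) rstar h (hmul W (m, 0) x).
  by apply: eq_bigr => m _; rewrite rstarE rr_hmul /rr /= oppr0.
congr (_ * _).
have -> : owedge (- W) Y X = (-1) ^+ n * owedge W Y X.
  rewrite /owedge mulmxN mulNmx -scaleN1r detZ.
  by rewrite mulrCA.
rewrite mulrCA.
set y := (_ * owedge W Y X).
rewrite !exprMn -!mulrA [LHS]mulrCA [RHS]mulrCA; congr (_ * _).
exact: gauss_pow.
Qed.

End Main.

Theorem mainTheorem11 (F : finFieldType) (n : nat) (W : 'M[F]_(n.*2))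
  (psi : F -> algC)
  (Tbar T : 'M[F]_(n, n.*2) -> 'M[F]_(n, n.*2) ->
            {ffun heis F n -> algC} -> {ffun heis F n -> algC}) :
  (2 \notin [pchar F])%N ->
  symplectic W ->
  additive_char psi -> nontrivial_char psi ->
  canon_triv (- W) psi Tbar ->
  canon_triv W (fun z => (psi z)^-1) T ->
  forall M L : 'M[F]_(n, n.*2), is_olag W M -> is_olag W L ->
  forall f : {ffun heis F n -> algC}, in_schr (- W) psi L f ->
    rstar (Tbar M L f) = T M L (rstar f).
Proof.
move=> hc hs hadd hnt hTb hT M L oM oL f hf.
have h2 : (2%:R : F) != 0 by apply: contra hc => H; rewrite inE /= H.
have oM' : is_olag (- W) M by rewrite olagN.
have oL' : is_olag (- W) L by rewrite olagN.
case: (eqVneq (psi 0) 0) => [p0 | hp0].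
  have f0 : f = 0.
    apply/ffunP => h; rewrite ffunE.
    have := hf 0 0 h (sub0mx _ _); rewrite !hmul00 p0 mul0r.
    by [].
  rewrite f0 (lin_zero hTb oM' oL').
  have -> : rstar (0 : {ffun heis F n -> algC}) = 0.
    by apply/ffunP => h; rewrite !ffunE.
  by rewrite (lin_zero hT oM oL).
case/andP: hs => /eqP hskew hunit.
have rL : \rank L = n by case/andP: oL => /eqP.
have rM : \rank M = n by case/andP: oM => /eqP.
have iL : (L <= perp W L)%MS by rewrite sub_perp; case/andP: oL.
have iM : (M <= perp W M)%MS by rewrite sub_perp; case/andP: oM.
have [N [oN tMN tNL]] := common_transversal hskew hunit h2 rL rM iL iM.
have oN' : is_olag (- W) N by rewrite olagN.
have hg : in_schr W (fun z => (psi z)^-1) L (rstar f).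
  by apply: schr_rstar; assumption.
have E1 : Tbar M L f = T0 (- W) psi M N (T0 (- W) psi N L f).
  case: hTb => [_ [Hmap [_ [_ [_ [Htr Hnorm]]]]]].
  have hNL := Hmap N L oN' oL' f hf.
  rewrite (Hnorm N L oN' oL' tNL f hf) in hNL.
  by rewrite -(Htr M N L oM' oN' oL' f hf) (Hnorm N L oN' oL' tNL f hf)
    (Hnorm M N oM' oN' tMN _ hNL).
have E2 : T M L (rstar f) = T0 W (fun z => (psi z)^-1) M N
             (T0 W (fun z => (psi z)^-1) N L (rstar f)).
  case: hT => [_ [Hmap [_ [_ [_ [Htr Hnorm]]]]]].
  have hNL := Hmap N L oN oL _ hg.
  rewrite (Hnorm N L oN oL tNL _ hg) in hNL.
  by rewrite -(Htr M N L oM oN oL _ hg) (Hnorm N L oN oL tNL _ hg)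
    (Hnorm M N oM oN tMN _ hNL).
rewrite E1 E2 !rstar_T0 //; assumption.
Qed.
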